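(* Let $\mathcal{A}\in\mathcal{T}'_6$ with $c_{13}^4=c_{14}^5=c_{15}^6=c_{24}^5=c_{25}^6=c_{14}^6=c_{24}^6=c_{13}^6=0$ and $c_{13}^5c_{35}^6\ne0$. Then the automorphisms of $\mathcal{A}$ are exactly the linear maps $\varphi$ given by $\varphi(e_1)=xe_1+a_{61}e_6$, $\varphi(e_2)=e_2+a_{62}e_6$, $\varphi(e_3)=xe_3$, $\varphi(e_4)=xe_4$, $\varphi(e_5)=x^2e_5$, $\varphi(e_6)=x^3e_6$, with $x\in\mathbb{C}^*$ and $a_{61},a_{62}\in\mathbb{C}$.
   Context: Over $\mathbb{C}$, basis $e_1,\dots,e_n$, $e_ie_j=\sum_kc_{ij}^ke_k$. For $n\ge3$, $\mathcal{T}'_n$ is the family of anticommutative algebra structures with $c_{ij}^k=0$ whenever $k\le\max\{i,j\}$ and $e_ie_{i+1}=e_{i+2}$ for $1\le i\le n-2$, other structure constants arbitrary subject to these and anticommutativity. *)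

(* Defs.v *)
From mathcomp Require Import all_boot all_algebra.
From mathcomp Require Import complex.
From mathcomp Require Import reals Rstruct.
Set Implicit Arguments. Unset Strict Implicit. Unset Printing Implicit Defensive.
Import GRing.Theory Num.Theory.
Local Open Scope ring_scope.

Notation C := (Rdefinitions.R[i]).

(* Structure constants: e_i e_j = \sum_k c i j k e_k, basis indexed by 'I_n
   (e_1,...,e_n of the paper are indices 0,...,n-1). *)
Definition sconst (F : Type) (n : nat) := 'I_n -> 'I_n -> 'I_n -> F.

Definition algmul (F : nzRingType) n (c : sconst F n) (u v : 'rV[F]_n) : 'rV[F]_n :=
  \row_k \sum_(i < n) \sum_(j < n) u 0 i * v 0 j * c i j k.

Definition in_Tprime (F : nzRingType) n (c : sconst F n) : Prop :=
  [/\
      (forall i k, c i i k = 0),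
      (forall i j k, c i j k = - c j i k),
      (forall i j k : 'I_n, (k <= maxn i j)%N -> c i j k = 0) &
      (forall i j k : 'I_n, (j : nat) = i.+1 -> c i j k = ((k : nat) == i.+2)%:R)].

(* The linear map phi with phi(e_i) = \sum_j A i j e_j acts on coordinate rows
   by u |-> u *m A.  It is an automorphism iff it is bijective and multiplicative. *)
Definition is_automorphism (F : comUnitRingType) n (c : sconst F n) (A : 'M[F]_n) : Prop :=
  A \in unitmx /\
  forall u v : 'rV[F]_n, algmul c (u *m A) (v *m A) = algmul c u v *m A.

Definition phi_mat (F : nzRingType) (x a61 a62 : F) : 'M[F]_6 :=
  \matrix_(i < 6, j < 6)
    match (i : nat), (j : nat) with
    | 0, 0 => x
    | 0, 5 => a61
    | 1, 1 => 1
    | 1, 5 => a62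
    | 2, 2 => x
    | 3, 3 => x
    | 4, 4 => x ^+ 2
    | 5, 5 => x ^+ 3
    | _, _ => 0
    end.

Definition e_ (k : nat) : 'I_6 := inord k.-1.

(* Main.v *)
Require Import Defs.
From mathcomp Require Import all_boot all_algebra.
From mathcomp Require Import complex.
From mathcomp Require Import reals Rstruct.
From mathcomp Require Import ring.
Import GRing.Theory Num.Theory.
Local Open Scope ring_scope.
Set Implicit Arguments. Unset Strict Implicit.

Definition cc (al be : C) (i j k : nat) : C :=
  match i, j, k with
  | 0,1,2 => 1 | 1,0,2 => -1 | 1,2,3 => 1 | 2,1,3 => -1
  | 2,3,4 => 1 | 3,2,4 => -1 | 3,4,5 => 1 | 4,3,5 => -1
  | 0,2,4 => al | 2,0,4 => -al | 2,4,5 => be | 4,2,5 => -be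
  | _,_,_ => 0 end.

Lemma cE (c : sconst C 6) :
  in_Tprime c ->
  c (e_ 1) (e_ 3) (e_ 4) = 0 -> c (e_ 1) (e_ 4) (e_ 5) = 0 ->
  c (e_ 1) (e_ 5) (e_ 6) = 0 -> c (e_ 2) (e_ 4) (e_ 5) = 0 ->
  c (e_ 2) (e_ 5) (e_ 6) = 0 -> c (e_ 1) (e_ 4) (e_ 6) = 0 ->
  c (e_ 2) (e_ 4) (e_ 6) = 0 -> c (e_ 1) (e_ 3) (e_ 6) = 0 ->
  forall i j k, (i < 6)%N -> (j < 6)%N -> (k < 6)%N ->
  c (inord i) (inord j) (inord k) =
    cc (c (inord 0%N) (inord 2%N) (inord 4%N)) (c (inord 2%N) (inord 4%N) (inord 5%N)) i j k.
Proof.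
case=> H0 Hanti Hlow Hcons h1 h2 h3 h4 h5 h6 h7 h8.
rewrite /e_ /= in h1 h2 h3 h4 h5 h6 h7 h8.
have Hl : forall i j k, (i < 6)%N -> (j < 6)%N -> (k < 6)%N -> (k <= maxn i j)%N ->
   c (inord i) (inord j) (inord k) = 0.
  by move=> i j k hi hj hk hm; apply: Hlow; rewrite !inordK.
have Hc : forall i k, (i.+1 < 6)%N -> (k < 6)%N ->
   c (inord i) (inord i.+1) (inord k) = (k == i.+2)%:R.
  move=> i k hi hk; rewrite Hcons ?inordK //; exact: ltnW.
move=> i j k.
case: i => [|[|[|[|[|[|i]]]]]] //= _;
case: j => [|[|[|[|[|[|j]]]]]] //= _;
case: k => [|[|[|[|[|[|k]]]]]] //= _;
first [ done | by rewrite Hl | by rewrite Hanti Hl | by rewrite Hc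
      | by rewrite Hanti Hc | by rewrite Hanti Hc /= ?oppr0 | by rewrite Hanti
      | by rewrite ?h1 ?h2 ?h3 ?h4 ?h5 ?h6 ?h7 ?h8
      | by rewrite Hanti ?h1 ?h2 ?h3 ?h4 ?h5 ?h6 ?h7 ?h8 oppr0 ].
Qed.


Lemma sum6 (F : 'I_6 -> C) : \sum_(i < 6) F i =
  F (inord 0%N) + F (inord 1%N) + F (inord 2%N) + F (inord 3%N) + F (inord 4%N) + F (inord 5%N).
Proof.
rewrite !big_ord_recr big_ord0 /= add0r.
by congr (_ + _ + _ + _ + _ + _); congr F; apply/val_inj; rewrite /= inordK.
Qed.

Definition pr (al be : C) (u v : nat -> C) (k : nat) : C :=
  match k with
  | 2 => u 0%N * v 1%N - u 1%N * v 0%N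
  | 3 => u 1%N * v 2%N - u 2%N * v 1%N
  | 4 => u 2%N * v 3%N - u 3%N * v 2%N + al * (u 0%N * v 2%N - u 2%N * v 0%N)
  | 5 => u 3%N * v 4%N - u 4%N * v 3%N + be * (u 2%N * v 4%N - u 4%N * v 2%N)
  | _ => 0 end.

Lemma pr_ext al be u u' v v' k : (forall l, (l < 6)%N -> u l = u' l) ->
  (forall l, (l < 6)%N -> v l = v' l) -> pr al be u v k = pr al be u' v' k.
Proof.
move=> hu hv; case: k => [|[|[|[|[|[|k]]]]]] //=; by rewrite !hu ?hv.
Qed.

Lemma algmulE al be (c : sconst C 6)
  (hc : forall i j k, (i < 6)%N -> (j < 6)%N -> (k < 6)%N ->
        c (inord i) (inord j) (inord k) = cc al be i j k)
  u v k : (k < 6)%N ->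
  algmul c u v 0 (inord k) = pr al be (fun l => u 0 (inord l)) (fun l => v 0 (inord l)) k.
Proof.
move=> hk; rewrite mxE !sum6.
case: k hk => [|[|[|[|[|[|k]]]]]] // _; rewrite !hc //=; ring.
Qed.

Definition dl (i : nat) : nat -> C := fun l => (i == l)%:R.

Lemma autE al be (c : sconst C 6)
  (hc : forall i j k, (i < 6)%N -> (j < 6)%N -> (k < 6)%N ->
        c (inord i) (inord j) (inord k) = cc al be i j k)
  (A : 'M[C]_6)
  (hA : forall u v, algmul c (u *m A) (v *m A) = algmul c u v *m A)
  i j k : (i < 6)%N -> (j < 6)%N -> (k < 6)%N ->
  pr al be (fun l => A (inord i) (inord l)) (fun l => A (inord j) (inord l)) k =
  pr al be (dl i) (dl j) 0%N * A (inord 0%N) (inord k) +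
  pr al be (dl i) (dl j) 1%N * A (inord 1%N) (inord k) +
  pr al be (dl i) (dl j) 2%N * A (inord 2%N) (inord k) +
  pr al be (dl i) (dl j) 3%N * A (inord 3%N) (inord k) +
  pr al be (dl i) (dl j) 4%N * A (inord 4%N) (inord k) +
  pr al be (dl i) (dl j) 5%N * A (inord 5%N) (inord k).
Proof.
move=> hi hj hk.
have := hA (delta_mx 0 (inord i)) (delta_mx 0 (inord j)).
move/rowP/(_ (inord k)); rewrite -!rowE (algmulE hc) // mxE sum6 !(algmulE hc) //.
have hd : forall i, (i < 6)%N -> forall l, (l < 6)%N ->
   (delta_mx 0 (inord i) : 'rV[C]_6) 0 (inord l) = dl i l.
  move=> i' hi' l hl; rewrite mxE /dl eqxx /=.
  by congr (_ %:R); congr (nat_of_bool _); rewrite -val_eqE /= !inordK.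
move=> E.
transitivity (pr al be (fun l => row (inord i) A 0 (inord l))
                       (fun l => row (inord j) A 0 (inord l)) k).
  by apply: pr_ext => l _; rewrite mxE.
rewrite E; congr (_ * _ + _ * _ + _ * _ + _ * _ + _ * _ + _ * _);
  by apply: pr_ext => l hl; rewrite hd.
Qed.


Ltac simp h := rewrite ?(mul0r, mulr0, add0r, addr0, mul1r, mulr1, subr0, sub0r, oppr0, mulr0n, mulr1n, opprK, mulN1r, mulrN1) in h.

Lemma zl (x y : C) : y != 0 -> x * y = 0 -> x = 0.
Proof. by move=> ny /eqP; rewrite mulf_eq0 (negbTE ny) orbF => /eqP. Qed.

Lemma mx6P (M N : 'M[C]_6) : (forall i j, (i < 6)%N -> (j < 6)%N ->
  M (inord i) (inord j) = N (inord i) (inord j)) -> M = N.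
Proof. by move=> h; apply/matrixP => i j; rewrite -(inord_val i) -(inord_val j); exact: h. Qed.

Lemma forward al be (c : sconst C 6)
  (hc : forall i j k, (i < 6)%N -> (j < 6)%N -> (k < 6)%N ->
        c (inord i) (inord j) (inord k) = cc al be i j k)
  (hal : al != 0) (hbe : be != 0) (A : 'M[C]_6) (hu : A \in unitmx)
  (hA : forall u v, algmul c (u *m A) (v *m A) = algmul c u v *m A) :
  exists x a61 a62, x != 0 /\ A = phi_mat x a61 a62.
Proof.
have E := @autE _ _ _ hc _ hA.
Ltac zap h := repeat match goal with z : _ = (0 : C) |- _ =>
   tryif constr_eq z h then fail else (rewrite z in h) end.
Ltac geq i j k h := have h := E i j k isT isT isT;
   rewrite /dl /= in h; zap h; simp h.
have z20 : A (inord 2%N) (inord 0%N) = 0 by geq 0%N 1%N 0%N h.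
have z21 : A (inord 2%N) (inord 1%N) = 0 by geq 0%N 1%N 1%N h.
have z30 : A (inord 3%N) (inord 0%N) = 0 by geq 1%N 2%N 0%N h.
have z31 : A (inord 3%N) (inord 1%N) = 0 by geq 1%N 2%N 1%N h.
have z32 : A (inord 3%N) (inord 2%N) = 0 by geq 1%N 2%N 2%N h.
have z40 : A (inord 4%N) (inord 0%N) = 0 by geq 2%N 3%N 0%N h.
have z41 : A (inord 4%N) (inord 1%N) = 0 by geq 2%N 3%N 1%N h.
have z42 : A (inord 4%N) (inord 2%N) = 0 by geq 2%N 3%N 2%N h.
have z43 : A (inord 4%N) (inord 3%N) = 0 by geq 2%N 3%N 3%N h.
have z50 : A (inord 5%N) (inord 0%N) = 0 by geq 3%N 4%N 0%N h.
have z51 : A (inord 5%N) (inord 1%N) = 0 by geq 3%N 4%N 1%N h.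
have z52 : A (inord 5%N) (inord 2%N) = 0 by geq 3%N 4%N 2%N h.
have z53 : A (inord 5%N) (inord 3%N) = 0 by geq 3%N 4%N 3%N h.
have z54 : A (inord 5%N) (inord 4%N) = 0 by geq 3%N 4%N 4%N h.
geq 0%N 1%N 2%N d22. geq 1%N 2%N 3%N d33. geq 2%N 3%N 4%N d44. geq 3%N 4%N 5%N d55.
have nz55 : A (inord 5%N) (inord 5%N) != 0.
  apply/negP => /eqP h55.
  have r0 : row (inord 5%N) A = 0.
    apply/rowP => j; rewrite !mxE -(inord_val j).
    by case: (nat_of_ord j) (ltn_ord j) => [|[|[|[|[|[|j']]]]]] //= _.
  have := congr1 (fun M => M *m invmx A) r0; rewrite rowE mulmxK // mul0mx.
  move/rowP/(_ (inord 5%N)); rewrite !mxE eqxx /= => /eqP.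
  by rewrite eqxx oner_eq0.
have := nz55; rewrite -d55 mulf_eq0 negb_or => /andP[nz33 nz44].
have := nz44; rewrite -d44 mulf_eq0 negb_or => /andP[nz22 _].
have := nz33; rewrite -d33 mulf_eq0 negb_or => /andP[nz11 _].
geq 0%N 2%N 3%N f1. geq 1%N 3%N 4%N f2. geq 0%N 3%N 4%N f3.
have z01 := zl nz22 f1. have z12 := zl nz33 f2. have z02 := zl nz33 f3.
clear f1 f2 f3.
geq 0%N 4%N 5%N f4. have z03 := zl nz44 f4. clear f4.
geq 1%N 4%N 5%N f5. have z13 := zl nz44 f5. clear f5.
have z23 : A (inord 2%N) (inord 3%N) = 0 by geq 0%N 1%N 3%N h.
geq 0%N 2%N 4%N g1. geq 2%N 4%N 5%N g2.
have g1' := mulfI hal g1. have g2' := mulfI hbe g2. clear g1 g2.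
have e23 : A (inord 2%N) (inord 2%N) = A (inord 3%N) (inord 3%N).
  by apply: (mulIf nz44); rewrite g2' d55.
have s1 : A (inord 1%N) (inord 1%N) = 1.
  by apply: (mulIf nz22); rewrite mul1r d33 e23.
have D2 : A (inord 2%N) (inord 2%N) = A (inord 0%N) (inord 0%N).
  by apply: (mulIf nz22); rewrite g1' -d44 -e23.
have D3 : A (inord 3%N) (inord 3%N) = A (inord 0%N) (inord 0%N) by rewrite -e23.
have D4 : A (inord 4%N) (inord 4%N) = A (inord 0%N) (inord 0%N) * A (inord 0%N) (inord 0%N).
  by rewrite -d44 D3 D2.
have D5 : A (inord 5%N) (inord 5%N) = A (inord 0%N) (inord 0%N) * A (inord 0%N) (inord 0%N) * A (inord 0%N) (inord 0%N).
  by rewrite -d55 D3 D4 mulrA.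
have nz0 : A (inord 0%N) (inord 0%N) != 0 by rewrite -D2.
clear e23 g1' g2' d22 d33 d44 d55.
have z24 : A (inord 2%N) (inord 4%N) = 0 by geq 0%N 1%N 4%N h; rewrite ?D2 ?D3 ?D4 ?D5 ?s1 in h; simp h.
have z25 : A (inord 2%N) (inord 5%N) = 0 by geq 0%N 1%N 5%N h; rewrite ?D2 ?D3 ?D4 ?D5 ?s1 in h; simp h.
geq 1%N 3%N 5%N k1; rewrite ?D2 ?D3 ?D4 ?D5 ?s1 in k1; simp k1. geq 0%N 3%N 5%N k2; rewrite ?D2 ?D3 ?D4 ?D5 ?s1 in k2; simp k2.
geq 1%N 2%N 4%N k3; rewrite ?D2 ?D3 ?D4 ?D5 ?s1 in k3; simp k3. geq 1%N 2%N 5%N k4; rewrite ?D2 ?D3 ?D4 ?D5 ?s1 in k4; simp k4. geq 2%N 3%N 5%N k5; rewrite ?D2 ?D3 ?D4 ?D5 ?s1 in k5; simp k5. geq 0%N 2%N 5%N k6; rewrite ?D2 ?D3 ?D4 ?D5 ?s1 in k6; simp k6.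
have z14 : A (inord 1%N) (inord 4%N) = 0.
  by move/eqP: k1; rewrite oppr_eq0 => /eqP /(zl nz0).
have z04 : A (inord 0%N) (inord 4%N) = 0.
  by move/eqP: k2; rewrite oppr_eq0 => /eqP /(zl nz0).
rewrite z04 in k6; simp k6.
have z45 : A (inord 4%N) (inord 5%N) = 0.
  by move/esym/eqP: k6; rewrite mulf_eq0 (negbTE hal) /= => /eqP.
rewrite z45 in k5; simp k5.
have z34 : A (inord 3%N) (inord 4%N) = 0.
  by move/eqP: k5; rewrite !mulf_eq0 (negbTE hbe) (negbTE nz0) /= => /eqP.
rewrite z34 in k3; simp k3.
have z10 : A (inord 1%N) (inord 0%N) = 0.
  by move/eqP: k3; rewrite !mulf_eq0 (negbTE hal) (negbTE nz0) /= orbF => /eqP.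
rewrite z14 in k4; simp k4.
have z35 : A (inord 3%N) (inord 5%N) = 0 by [].
clear k1 k2 k3 k4 k5 k6.
exists (A (inord 0%N) (inord 0%N)), (A (inord 0%N) (inord 5%N)), (A (inord 1%N) (inord 5%N)).
split => //.
apply: mx6P => i j hi hj; rewrite mxE !inordK //.
Ltac zapg := repeat match goal with z : _ = (0 : C) |- _ => rewrite z end.
case: i hi => [|[|[|[|[|[|i]]]]]] // _; case: j hj => [|[|[|[|[|[|j]]]]]] // _ /=;
  zapg; rewrite ?D2 ?D3 ?D4 ?D5 ?s1 //; ring.
Qed.


Lemma phi_unit (x a b : C) : x != 0 -> phi_mat x a b \in unitmx.
Proof.
move=> nx; rewrite unitmxE -det_tr det_trig.
  rewrite !big_ord_recr big_ord0 /= !mxE /= unitfE.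
  by rewrite !mul1r !mulf_neq0 ?expf_neq0 ?oner_neq0.
apply/is_trig_mxP => -[i hi] [j hj] /= lt; rewrite !mxE /=.
by case: i hi lt => [|[|[|[|[|[|i]]]]]] //; case: j hj => [|[|[|[|[|[|j]]]]]].
Qed.

Definition W (x a b : C) (U : nat -> C) (l : nat) : C :=
  match l with
  | 0 => U 0%N * x | 1 => U 1%N | 2 => U 2%N * x | 3 => U 3%N * x
  | 4 => U 4%N * x ^+ 2 | _ => U 0%N * a + U 1%N * b + U 5%N * x ^+ 3 end.

Lemma rowphi (x a b : C) (u : 'rV[C]_6) l : (l < 6)%N ->
  (u *m phi_mat x a b) 0 (inord l) = W x a b (fun t => u 0 (inord t)) l.
Proof.
move=> hl; rewrite mxE sum6 !mxE !inordK //.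
case: l hl => [|[|[|[|[|[|l]]]]]] // _ /=; ring.
Qed.

Lemma phi_mult al be (c : sconst C 6)
  (hc : forall i j k, (i < 6)%N -> (j < 6)%N -> (k < 6)%N ->
        c (inord i) (inord j) (inord k) = cc al be i j k)
  (x a b : C) : x != 0 -> is_automorphism c (phi_mat x a b).
Proof.
move=> nx; split; first exact: phi_unit.
move=> u v; apply/rowP => k; rewrite -(inord_val k); move: (nat_of_ord k) (ltn_ord k) => {}k hk.
rewrite (algmulE hc) //.
rewrite (@pr_ext _ _ _ (W x a b (fun t => u 0 (inord t))) _
   (W x a b (fun t => v 0 (inord t)))); last by move=> l hl; rewrite rowphi.
  2: by move=> l hl; rewrite rowphi.
rewrite mxE sum6 !(algmulE hc) // !mxE !inordK //.
case: k hk => [|[|[|[|[|[|k]]]]]] // _ /=; ring.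
Qed.

Theorem mainTheorem16 (c : sconst C 6) :
  in_Tprime c ->
  c (e_ 1) (e_ 3) (e_ 4) = 0 -> c (e_ 1) (e_ 4) (e_ 5) = 0 ->
  c (e_ 1) (e_ 5) (e_ 6) = 0 -> c (e_ 2) (e_ 4) (e_ 5) = 0 ->
  c (e_ 2) (e_ 5) (e_ 6) = 0 -> c (e_ 1) (e_ 4) (e_ 6) = 0 ->
  c (e_ 2) (e_ 4) (e_ 6) = 0 -> c (e_ 1) (e_ 3) (e_ 6) = 0 ->
  c (e_ 1) (e_ 3) (e_ 5) * c (e_ 3) (e_ 5) (e_ 6) != 0 ->
  forall A : 'M[C]_6,
    is_automorphism c A <->
    exists x : C, exists a61 : C, exists a62 : C,
      x != 0 /\ A = phi_mat x a61 a62.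
Proof.
move=> hT h1 h2 h3 h4 h5 h6 h7 h8 hne A.
have hc := cE hT h1 h2 h3 h4 h5 h6 h7 h8.
rewrite /e_ /= in hne.
have [hal hbe] : (c (inord 0%N) (inord 2%N) (inord 4%N) != 0) /\ (c (inord 2%N) (inord 4%N) (inord 5%N) != 0).
  by move: hne; rewrite mulf_eq0 negb_or => /andP.
move: hc hal hbe.
generalize (c (inord 0%N) (inord 2%N) (inord 4%N)) => al.
generalize (c (inord 2%N) (inord 4%N) (inord 5%N)) => be.
move=> hc hal hbe; split.
  case=> hu hA; apply: (forward hc hal hbe hu) => u v; exact: hA.
case=> x [a [b [nx ->]]]; exact: (@phi_mult _ _ _ hc x a b nx).
Qed.
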